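(* Let $(\Omega,\mathcal F,\mu)$ be a locally finite ($\sigma$-finite) measure space and $\mathcal P_>$ the set of $\mu$-a.s. strictly positive probability densities. Let $\phi:(0,\infty)\to(0,\phi(\infty))$ be surjective, increasing, continuous and affinely bounded ($\phi(x)\le Ax+B$ for some constants $A,B$), and let $\ln_\phi$, $\exp_\phi$ be as in the context. Say that $p,q\in\mathcal P_>$ are $\phi$-connected by an open arc if there is an open interval $]a,b[\supset[0,1]$ such that for every $t\in]a,b[$, $$\int \exp_\phi\bigl((1-t)\ln_\phi p+t\ln_\phi q\bigr)\,d\mu<+\infty.$$ Then this relation is an equivalence relation on $\mathcal P_>$.
   Context: The $\phi$-logarithm is $\ln_\phi(v)=\int_1^v \frac{dx}{\phi(x)}$ for $v>0$; it is strictly increasing and concave, with range $]-m,+\infty[$ where $m=\int_0^1\frac{dx}{\phi(x)}>0$. The $\phi$-exponential $\exp_\phi:]-m,+\infty[\to(0,\infty)$ is its inverse function; it is positive, increasing, convex and differentiable. In the definition of $\phi$-connection the integrand is required to be well defined, i.e. its argument lies $\mu$-a.e. in the domain of $\exp_\phi$. *)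

(* Defs.v *)
From HB Require Import structures.
From mathcomp Require Import all_boot all_order all_algebra.
From mathcomp Require Import all_classical all_reals all_analysis.
Set Implicit Arguments. Unset Strict Implicit. Unset Printing Implicit Defensive.
Import Order.TTheory GRing.Theory Num.Theory.
Import numFieldNormedType.Exports.
Local Open Scope classical_set_scope.
Local Open Scope ring_scope.

Section PhiDefs.
Context {R : realType}.

(* ln_phi v = \int_1^v dx / phi x  (oriented integral; Lebesgue integral of the
   continuous positive integrand on the compact interval). *)
Definition lnphi (phi : R -> R) (v : R) : R :=
  if 1 <= v then Rintegral lebesgue_measure `[1, v] (fun x => (phi x)^-1)
  else - Rintegral lebesgue_measure `[v, 1] (fun x => (phi x)^-1).

Definition in_dom_expphi (phi : R -> R) (u : R) : Prop :=
  exists v : R, 0 < v /\ lnphi phi v = u.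

(* exp_phi : inverse of ln_phi on its range (value 0 outside, irrelevant) *)
Definition expphi (phi : R -> R) (u : R) : R :=
  xget 0 [set v : R | 0 < v /\ lnphi phi v = u].

Definition phi_admissible (phi : R -> R) : Prop :=
  (forall x y : R, 0 < x -> x <= y -> phi x <= phi y) /\
  (forall x : R, 0 < x -> {for x, continuous phi}) /\
  (exists L : \bar R, phi @` `]0, +oo[ = [set y : R | 0 < y /\ (y%:E < L)%E]) /\
  (exists A B : R, forall x : R, 0 < x -> phi x <= A * x + B).

Context {d : measure_display} {T : measurableType d}.

Definition pos_density (mu : {measure set T -> \bar R}) (p : T -> R) : Prop :=
  measurable_fun setT p /\
  {ae mu, forall x, 0 < p x} /\
  (\int[mu]_x (p x)%:E = 1)%E.

Definition phi_connected (phi : R -> R) (mu : {measure set T -> \bar R})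
    (p q : T -> R) : Prop :=
  exists a b : R, a < 0 /\ 1 < b /\
    forall t : R, a < t -> t < b ->
      {ae mu, forall x,
          in_dom_expphi phi ((1 - t) * lnphi phi (p x) + t * lnphi phi (q x))} /\
      (\int[mu]_x (expphi phi ((1 - t) * lnphi phi (p x)
                              + t * lnphi phi (q x)))%:E < +oo)%E.

End PhiDefs.

(* Main.v *)
Require Import Defs.
From HB Require Import structures.
From mathcomp Require Import all_boot all_order all_algebra.
From mathcomp Require Import all_classical all_reals all_analysis.
From mathcomp Require Import ring lra measurable_realfun.
Import Order.TTheory GRing.Theory Num.Theory.
Import numFieldNormedType.Exports.
Local Open Scope classical_set_scope.
Local Open Scope ring_scope.


Definition Ii {R : realType} (phi : R -> R) (x y : R) : R :=
  Rintegral lebesgue_measure `[x, y] (fun z => (phi z)^-1).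

Lemma phi_pos {R : realType} (phi : R -> R) : phi_admissible phi ->
  forall x, 0 < x -> 0 < phi x.
Proof.
move=> [_ [_ [[L HL] _]]] x x0.
have : (phi @` `]0, +oo[) (phi x) by exists x => //=; rewrite in_itv /= andbT.
by rewrite HL => -[].
Qed.

Lemma f_cont {R : realType} (phi : R -> R) : phi_admissible phi ->
  forall x, 0 < x -> {for x, continuous (fun z => (phi z)^-1)}.
Proof.
move=> hp x x0; apply: continuousV; first by rewrite gt_eqF // phi_pos.
by case: hp => _ [hc _]; exact: hc.
Qed.

Lemma f_int {R : realType} (phi : R -> R) : phi_admissible phi ->
  forall x y, 0 < x ->
  (@lebesgue_measure R).-integrable `[x, y] (EFin \o (fun z => (phi z)^-1)).
Proof.
move=> hp x y x0; apply: continuous_compact_integrable; first exact: segment_compact.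
apply: continuous_in_subspaceT => z; rewrite inE /= in_itv /= => /andP[xz _].
exact: f_cont (lt_le_trans x0 xz).
Qed.



Lemma I_add {R : realType} (phi : R -> R) : phi_admissible phi ->
  forall x y z, 0 < x -> x <= y -> y <= z -> Ii phi x z = Ii phi x y + Ii phi y z.
Proof.
move=> hp x y z x0 xy yz; rewrite /Ii.
have := @Rintegral_itvB R (fun z => (phi z)^-1) (BLeft x) (BRight z) y.
rewrite Rintegral_itv_obnd_cbnd; last first.
  move: (f_int phi hp x z x0); apply: integrableS => //.

  by apply: subset_itvr; rewrite bnd_simp.
move=> H; apply/eqP; rewrite addrC -subr_eq; apply/eqP; apply: H.
- exact: f_int.
- by rewrite bnd_simp.
- by rewrite bnd_simp.
Qed.

Lemma I_bounds {R : realType} (phi : R -> R) : phi_admissible phi ->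
  forall x y, 0 < x -> x <= y ->
  (y - x) * (phi y)^-1 <= Ii phi x y <= (y - x) * (phi x)^-1.
Proof.
move=> hp x y x0 xy.
have mes : fine (@lebesgue_measure R `[x, y]) = y - x.
  rewrite lebesgue_measure_itv /=; case: ifPn => [_|]; first by [].
  rewrite lte_fin -leNgt => yx /=; lra.
have hm := hp; case: hm => hmono _.
apply/andP; split.
- rewrite -mes mulrC -Rintegral_cst //; apply: le_Rintegral => //.
  + apply: continuous_compact_integrable; first exact: segment_compact.
    by apply: continuous_subspaceT => z; exact: cvg_cst.
  + exact: f_int.
  + move=> z; rewrite /= in_itv /= => /andP[xz zy].
    have z0 : 0 < z by exact: lt_le_trans x0 xz.
    by rewrite lef_pV2 ?posrE ?phi_pos // ?hmono // (lt_le_trans z0).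
- rewrite /Ii -mes mulrC -Rintegral_cst //; apply: le_Rintegral => //.
  + exact: f_int.
  + apply: continuous_compact_integrable; first exact: segment_compact.
    by apply: continuous_subspaceT => z; exact: cvg_cst.
  + move=> z; rewrite /= in_itv /= => /andP[xz zy].
    have z0 : 0 < z by exact: lt_le_trans x0 xz.
    by rewrite lef_pV2 ?posrE ?phi_pos // ?hmono.
Qed.



Lemma Lnphi_eq {R : realType} (phi : R -> R) v :
  lnphi phi v = if 1 <= v then Ii phi 1 v else - Ii phi v 1.
Proof. by []. Qed.

Lemma L_diff {R : realType} (phi : R -> R) : phi_admissible phi ->
  forall x y, 0 < x -> x <= y -> lnphi phi y - lnphi phi x = Ii phi x y.
Proof.
move=> hp x y x0 xy; rewrite !Lnphi_eq.
case: (leP 1 x) => x1.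
  rewrite (le_trans x1 xy) (I_add phi hp 1 x y) //; first by ring.
case: (leP 1 y) => y1.
  rewrite (I_add phi hp x 1 y) //; first by ring. exact: ltW.
rewrite (I_add phi hp x y 1) //; [ring | exact: ltW].
Qed.

Lemma L_le {R : realType} (phi : R -> R) : phi_admissible phi ->
  forall x y, 0 < x -> x <= y -> lnphi phi x <= lnphi phi y.
Proof.
move=> hp x y x0 xy; rewrite -subr_ge0 L_diff //.
have /andP[h _] := I_bounds phi hp x y x0 xy; apply: le_trans h.
apply: mulr_ge0; first by rewrite subr_ge0.
by rewrite invr_ge0 ltW // phi_pos // (lt_le_trans x0).
Qed.

Lemma L_lt {R : realType} (phi : R -> R) : phi_admissible phi ->
  forall x y, 0 < x -> x < y -> lnphi phi x < lnphi phi y.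
Proof.
move=> hp x y x0 xy; rewrite -subr_gt0 L_diff // ?ltW //.
have /andP[h _] := I_bounds phi hp x y x0 (ltW xy); apply: lt_le_trans h.
apply: mulr_gt0; first by rewrite subr_gt0.
by rewrite invr_gt0 phi_pos // (lt_trans x0).
Qed.

Lemma L_concave_aux {R : realType} (phi : R -> R) : phi_admissible phi ->
  forall x y c, 0 < x -> x <= y -> 0 <= c <= 1 ->
  c * lnphi phi x + (1 - c) * lnphi phi y <= lnphi phi (c * x + (1 - c) * y).
Proof.
move=> hp x y c x0 xy /andP[c0 c1].
set z := c * x + (1 - c) * y.
have xz : x <= z by rewrite /z; nra.
have zy : z <= y by rewrite /z; nra.
have z0 : 0 < z by exact: lt_le_trans xz.
have /andP[h1 _] := I_bounds phi hp x z x0 xz.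
have /andP[_ h2] := I_bounds phi hp z y z0 zy.
rewrite -L_diff // in h1; rewrite -L_diff // in h2.
set F := (phi z)^-1 in h1 h2.
have F0 : 0 < F by rewrite invr_gt0 phi_pos.
have e1 : z - x = (1 - c) * (y - x) by rewrite /z; ring.
have e2 : y - z = c * (y - x) by rewrite /z; ring.
rewrite e1 in h1; rewrite e2 in h2.
have h1' := ler_wpM2l c0 h1.
have h2' : (1 - c) * (lnphi phi y - lnphi phi z) <= (1 - c) * (c * (y - x) * F).
  by apply: ler_wpM2l => //; lra.
nra.
Qed.

Lemma L_concave {R : realType} (phi : R -> R) : phi_admissible phi ->
  forall x y c, 0 < x -> 0 < y -> 0 <= c <= 1 ->
  c * lnphi phi x + (1 - c) * lnphi phi y <= lnphi phi (c * x + (1 - c) * y).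
Proof.
move=> hp x y c x0 y0 hc; case: (leP x y) => xy; first exact: L_concave_aux.
have hc' : 0 <= 1 - c <= 1 by move: hc => /andP[? ?]; apply/andP; split; lra.
have := L_concave_aux phi hp y x (1 - c) y0 (ltW xy) hc'.
have -> : 1 - (1 - c) = c by ring.
by rewrite addrC [X in _ <= lnphi phi X]addrC.
Qed.



Import Num.Def.

Lemma L_cont {R : realType} (phi : R -> R) : phi_admissible phi ->
  forall x0 : R, 0 < x0 -> {for x0, continuous (lnphi phi)}.
Proof.
move=> hp x0 x00; have [hmono _] := hp.
set K := (phi (x0 / 2))^-1.
have K0 : 0 < K by rewrite invr_gt0 (phi_pos phi hp) // divr_gt0.
apply/cvgrPdist_le => e e0.
have d0 : 0 < minr (x0 / 2) (e / K) by rewrite lt_min divr_gt0 //= divr_gt0.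
near=> z.
have : ball x0 (minr (x0 / 2) (e / K)) z.
  near: z; exists (minr (x0 / 2) (e / K)) => // y; rewrite -ball_normE.
rewrite -ball_normE /= lt_min => /andP[hz1 hz2].
have z0 : x0 / 2 < z.
  by move: hz1; rewrite ltr_distlC => /andP[+ _]; lra.
have eK : e / K * K <= e by rewrite divfK ?gt_eqF.
case: (leP x0 z) => xz.
- rewrite distrC ger0_norm; last by rewrite subr_ge0 L_le.
  rewrite L_diff //.
  have /andP[_ h] := I_bounds phi hp x0 z x00 xz.
  apply: (le_trans h); apply: (le_trans _ eK).
  rewrite distrC ger0_norm ?subr_ge0 // in hz2.
  apply: ler_pM; first by rewrite subr_ge0.
  + by rewrite invr_ge0 ltW // (phi_pos phi hp).
  + exact: ltW.
  + rewrite /K lef_pV2 ?posrE ?(phi_pos phi hp) ?divr_gt0 //.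
    have h2 : x0 / 2 <= x0 by lra.
    have h0 : 0 < x0 / 2 by lra.
    exact: (hmono _ _ h0 h2).
- have z0' : 0 < z by lra.
  rewrite ger0_norm; last by rewrite subr_ge0 L_le // ltW.
  rewrite L_diff //; last exact: ltW.
  have /andP[_ h] := I_bounds phi hp z x0 z0' (ltW xz).
  apply: (le_trans h); apply: (le_trans _ eK).
  rewrite ger0_norm ?subr_ge0 ?ltW // in hz2.
  apply: ler_pM; first by rewrite subr_ge0 ltW.
  + by rewrite invr_ge0 ltW // (phi_pos phi hp).
  + exact: ltW.
  + rewrite /K lef_pV2 ?posrE ?(phi_pos phi hp) ?divr_gt0 //.
    have h2 : x0 / 2 <= z by lra.
    have h0 : 0 < x0 / 2 by lra.
    exact: (hmono _ _ h0 h2).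
Unshelve. all: by end_near.
Qed.



Lemma Dom_interval {R : realType} (phi : R -> R) : phi_admissible phi ->
  is_interval (in_dom_expphi phi).
Proof.
move=> hp u1 u2 [v1 [v10 <-]] [v2 [v20 <-]] u /andP[h1 h2].
case: (ltP v2 v1) => v12.
  have := L_lt phi hp v2 v1 v20 v12; lra.
have := @IVT R (lnphi phi) v1 v2 u v12.
case.
- apply: continuous_in_subspaceT => z; rewrite inE /= in_itv /= => /andP[hz _].
  exact: L_cont (lt_le_trans v10 hz).
- have hl := L_le phi hp v1 v2 v10 v12.
  rewrite /minr /maxr; case: ifPn => hh; last rewrite -leNgt in hh; apply/andP; split; lra.
- move=> c; rewrite in_itv /= => /andP[hc _] hcu; exists c; split => //.
  exact: lt_le_trans hc.
Qed.

Lemma E_spec {R : realType} (phi : R -> R) u :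
  in_dom_expphi phi u -> 0 < expphi phi u /\ lnphi phi (expphi phi u) = u.
Proof. by move=> h; have := xgetPex 0 h. Qed.

Lemma E_ge0 {R : realType} (phi : R -> R) u : 0 <= expphi phi u.
Proof. by rewrite /expphi; case: xgetP => // x _ [/ltW]. Qed.

Lemma E_L {R : realType} (phi : R -> R) : phi_admissible phi ->
  forall v, 0 < v -> expphi phi (lnphi phi v) = v.
Proof.
move=> hp v v0; apply: xget_unique; first by split.
move=> w [w0 hw]; apply/eqP; rewrite eq_le; apply/andP; split.
- rewrite leNgt; apply/negP => vw; have := L_lt phi hp v w v0 vw; lra.
- rewrite leNgt; apply/negP => vw; have := L_lt phi hp w v w0 vw; lra.
Qed.

Lemma Dom_conv {R : realType} (phi : R -> R) : phi_admissible phi ->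
  forall u1 u2 c, in_dom_expphi phi u1 -> in_dom_expphi phi u2 -> 0 <= c <= 1 ->
  in_dom_expphi phi (c * u1 + (1 - c) * u2).
Proof.
move=> hp u1 u2 c h1 h2 /andP[c0 c1].
case: (leP u1 u2) => u12.
  by apply: (Dom_interval phi hp _ _ h1 h2); apply/andP; split; nra.
by apply: (Dom_interval phi hp _ _ h2 h1); apply/andP; split; nra.
Qed.

Lemma E_conv {R : realType} (phi : R -> R) : phi_admissible phi ->
  forall u1 u2 c, in_dom_expphi phi u1 -> in_dom_expphi phi u2 -> 0 <= c <= 1 ->
  expphi phi (c * u1 + (1 - c) * u2) <= c * expphi phi u1 + (1 - c) * expphi phi u2.
Proof.
move=> hp u1 u2 c h1 h2 hc.
have [e10 e1] := E_spec _ _ h1; have [e20 e2] := E_spec _ _ h2.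
have [e0 e] := E_spec _ _ (Dom_conv phi hp _ _ _ h1 h2 hc).
have hcon := L_concave phi hp _ _ c e10 e20 hc.
rewrite e1 e2 -e in hcon.
have w0 : 0 < c * expphi phi u1 + (1 - c) * expphi phi u2.
  move: hc => /andP[c0 c1]; case: (ltP 0 c) => cp.
    have := mulr_gt0 cp e10; have : 0 <= 1 - c by lra.
    move=> /(mulr_ge0) /(_ (ltW e20)); lra.
  have -> : c = 0 by lra.
  by rewrite mul0r add0r subr0 mul1r.
rewrite leNgt; apply/negP => hlt.
have := L_lt phi hp _ _ w0 hlt; lra.
Qed.



Lemma mono_meas {R : realType} (D : set R) (f : R -> R) : is_interval D ->
  (forall x y, D x -> D y -> x <= y -> f x <= f y) -> measurable_fun D f.
Proof.
move=> iD f_nd.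
apply: (measurability (@RGenCInfty.G R)) => [|/= _ [_] [r] -> <-].
  exact: RGenCInfty.measurableE.
move=> mD.
apply: is_interval_measurable => s t [Ds fs] [Dt ft] u /andP[su ut].
have Du : D u by apply: (iD s t) => //; apply/andP; split.
rewrite /=; split => //.
move: fs; rewrite /= !in_itv /= !andbT => fs.
by apply: (le_trans fs); apply: f_nd.
Qed.

Lemma L_meas {R : realType} (phi : R -> R) : phi_admissible phi ->
  measurable_fun (`]0, +oo[ : set R) (lnphi phi).
Proof.
move=> hp; apply: mono_meas.
  by apply: interval_is_interval.
move=> x y; rewrite /= !in_itv /= !andbT => x0 _; exact: L_le.
Qed.

Lemma E_meas {R : realType} (phi : R -> R) : phi_admissible phi ->
  measurable_fun (in_dom_expphi phi) (expphi phi).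
Proof.
move=> hp; apply: mono_meas; first exact: Dom_interval.
move=> u1 u2 h1 h2 u12.
have [e10 e1] := E_spec _ _ h1; have [e20 e2] := E_spec _ _ h2.
rewrite leNgt; apply/negP => hlt.
have := L_lt phi hp _ _ e20 hlt; lra.
Qed.

Lemma int_le_nm {d} {T : measurableType d} {R : realType}
  (mu : {measure set T -> \bar R}) (f g : T -> \bar R) :
  (forall x, (0 <= f x)%E) -> (forall x, (f x <= g x)%E) ->
  (\int[mu]_x f x <= \int[mu]_x g x)%E.
Proof.
move=> f0 fg.
rewrite !ge0_integralTE //; last by move=> x; exact: le_trans (f0 x) (fg x).
apply: le_ereal_sup => _ [h hf <-]; exists h => //= x.
exact: le_trans (hf x) (fg x).
Qed.



Lemma ae_null {d} {T : measurableType d} {R : realType}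
  (mu : {measure set T -> \bar R}) (S : set T) :
  measurable S -> {ae mu, forall x, S x} -> mu (~` S) = 0%E.
Proof.
move=> mS [A [mA muA sub]].
apply: (subset_measure0 _ _ _ muA) => //; first exact: measurableC.
Qed.

Lemma key {d} {T : measurableType d} {R : realType}
  (mu : {measure set T -> \bar R}) (S : set T) (F g : T -> R) :
  measurable S -> mu (~` S) = 0%E -> measurable_fun S F ->
  (forall x, S x -> 0 <= F x) -> (forall x, 0 <= g x) ->
  (forall x, S x -> g x <= F x) ->
  (\int[mu]_x (g x)%:E <= \int[mu]_(x in S) (F x)%:E)%E.
Proof.
move=> mS muS mF F0 g0 gF.
pose G x := if x \in S then (F x)%:E else +oo%E.
have G0 x : (0 <= G x)%E.
  by rewrite /G; case: ifPn => // /set_mem /F0; rewrite lee_fin.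
apply: (@le_trans _ _ (\int[mu]_x G x)%E).
  apply: int_le_nm => x; first by rewrite lee_fin.
  by rewrite /G; case: ifPn => [/set_mem /gF|_]; rewrite ?lee_fin ?leey.
have mG : measurable_fun setT G.
  apply: measurable_fun_if => //.
  - apply: (measurable_fun_bool true); rewrite setTI.
    have -> : (fun x => x \in S) @^-1` [set true] = S.
      by apply/seteqP; split => x /=; [move=> /set_mem | move=> /mem_set].
    exact: mS.
  - have -> : setT `&` (fun x => x \in S) @^-1` [set true] = S.
      by apply/seteqP; split => x /=; [move=> [_ /set_mem] | move=> /mem_set].
    exact/measurable_EFinP.
rewrite (@ge0_negligible_integral _ _ _ mu setT (~` S)) //; first last.
  exact: measurableC.
rewrite setTD setCK (eq_integral (fun x => (F x)%:E)) // => x xS; by rewrite /G xS.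
Qed.

Lemma ltey_mul {R : realType} (c : R) (x : \bar R) :
  (0 <= x)%E -> (x < +oo)%E -> (c%:E * x < +oo)%E.
Proof. by case: x => // r _ _; rewrite -EFinM ltry. Qed.

Lemma fin2 {d} {T : measurableType d} {R : realType}
  (mu : {measure set T -> \bar R}) (S : set T) (g1 g2 : T -> R) (c1 c2 : R) :
  measurable S -> measurable_fun S g1 -> measurable_fun S g2 ->
  (forall x, S x -> 0 <= g1 x) -> (forall x, S x -> 0 <= g2 x) ->
  0 <= c1 -> 0 <= c2 ->
  (\int[mu]_(x in S) (g1 x)%:E < +oo)%E ->
  (\int[mu]_(x in S) (g2 x)%:E < +oo)%E ->
  (\int[mu]_(x in S) (c1 * g1 x + c2 * g2 x)%:E < +oo)%E.
Proof.
move=> mS m1 m2 p1 p2 c10 c20 i1 i2.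
under eq_integral do rewrite EFinD 2!EFinM.
have q1 x : S x -> (0 <= c1%:E * (g1 x)%:E)%E by move=> Sx; rewrite -EFinM lee_fin mulr_ge0 // p1.
have q2 x : S x -> (0 <= c2%:E * (g2 x)%:E)%E by move=> Sx; rewrite -EFinM lee_fin mulr_ge0 // p2.
have n1 : measurable_fun S (fun x => c1%:E * (g1 x)%:E)%E.
  by apply/measurable_EFinP; apply: measurable_funM => //; exact: measurable_cst.
have n2 : measurable_fun S (fun x => c2%:E * (g2 x)%:E)%E.
  by apply/measurable_EFinP; apply: measurable_funM => //; exact: measurable_cst.
have e1 : measurable_fun S (fun x => (g1 x)%:E) by apply/measurable_EFinP.
have e2 : measurable_fun S (fun x => (g2 x)%:E) by apply/measurable_EFinP.
have r1 x : S x -> (0 <= (g1 x)%:E)%E by move=> Sx; rewrite lee_fin p1.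
have r2 x : S x -> (0 <= (g2 x)%:E)%E by move=> Sx; rewrite lee_fin p2.
rewrite ge0_integralD // !ge0_integralZl //.
by rewrite lte_add_pinfty // ltey_mul // integral_ge0.
Qed.

Lemma restrict_le {d} {T : measurableType d} {R : realType}
  (mu : {measure set T -> \bar R}) (S : set T) (g : T -> R) :
  (forall x, 0 <= g x) ->
  (\int[mu]_(x in S) (g x)%:E <= \int[mu]_x (g x)%:E)%E.
Proof.
move=> g0; rewrite integral_mkcond; apply: int_le_nm => x; rewrite patchE;
  case: ifPn => _; rewrite ?lee_fin //.
Qed.



Lemma h_meas {d} {T : measurableType d} {R : realType} (phi : R -> R) :
  phi_admissible phi -> forall (S : set T) (p q : T -> R) (a b : R),
  measurable S -> measurable_fun setT p -> measurable_fun setT q ->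
  (forall x, S x -> 0 < p x /\ 0 < q x) ->
  measurable_fun S (fun x => a * lnphi phi (p x) + b * lnphi phi (q x)).
Proof.
move=> hp S p q a b mS mp mq pos.
have hL := L_meas phi hp.
have sp : p @` S `<=` `]0, +oo[.
  by move=> _ [x Sx <-]; rewrite /= in_itv /= andbT; case: (pos x Sx).
have sq : q @` S `<=` `]0, +oo[.
  by move=> _ [x Sx <-]; rewrite /= in_itv /= andbT; case: (pos x Sx).
have m1 := measurable_comp (measurable_itv _) sp hL (measurable_funTS mp).
have m2 := measurable_comp (measurable_itv _) sq hL (measurable_funTS mq).
apply: measurable_funD; apply: measurable_funM => //.
Qed.

Lemma Dom_meas {R : realType} (phi : R -> R) : phi_admissible phi ->
  measurable (in_dom_expphi phi).
Proof. by move=> hp; apply: is_interval_measurable; exact: Dom_interval. Qed.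

Lemma Eh_meas {d} {T : measurableType d} {R : realType} (phi : R -> R) :
  phi_admissible phi -> forall (S : set T) (h : T -> R),
  measurable S -> measurable_fun S h ->
  measurable_fun (S `&` h @^-1` in_dom_expphi phi) (fun x => expphi phi (h x)).
Proof.
move=> hp S h mS mh.
have sh : h @` (S `&` h @^-1` in_dom_expphi phi) `<=` in_dom_expphi phi.
  by move=> _ [x [_ hx] <-].
have mh' : measurable_fun (S `&` h @^-1` in_dom_expphi phi) h.
  by apply: measurable_funS mh => // x [].
exact: (measurable_comp (Dom_meas phi hp) sh (E_meas phi hp) mh').
Qed.

Lemma pos_meas {d} {T : measurableType d} {R : realType} (p : T -> R) :
  measurable_fun setT p -> measurable [set x | 0 < p x].
Proof.
move=> mp.
have -> : [set x | 0 < p x] = setT `&` p @^-1` `]0, +oo[.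
  by apply/seteqP; split => x /=; rewrite in_itv /= andbT // => -[].
exact: (mp measurableT _ (measurable_itv _)).
Qed.



Lemma refl_part {d} {T : measurableType d} {R : realType}
  (mu : {measure set T -> \bar R}) (phi : R -> R) : phi_admissible phi ->
  forall p, pos_density mu p -> phi_connected phi mu p p.
Proof.
move=> hp p [mp [pp ip]].
exists (-1), 2; split; first lra; split; first lra.
move=> t _ _.
have eqx x : (1 - t) * lnphi phi (p x) + t * lnphi phi (p x) = lnphi phi (p x) by ring.
split.
  by apply: filterS pp => x px; rewrite eqx; exists (p x).
have mS := pos_meas p mp.
apply: (le_lt_trans (key mu _ p _ mS (ae_null mu _ mS pp) (measurable_funTS mp) _ _ _)).
- by move=> x /ltW.
- by move=> x; exact: E_ge0.
- by move=> x px; rewrite eqx E_L.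
rewrite integral_mkcond.
rewrite (ae_eq_integral (fun x => (p x)%:E)) //.
- by rewrite ip ltry.
- apply/(measurable_restrictT _ mS).
  by apply/measurable_EFinP; exact: measurable_funTS.
- exact/measurable_EFinP.
- by apply: filterS pp => x px _; rewrite patchE mem_set.
Qed.

Lemma sym_part {d} {T : measurableType d} {R : realType}
  (mu : {measure set T -> \bar R}) (phi : R -> R) :
  forall p q, phi_connected phi mu p q -> phi_connected phi mu q p.
Proof.
move=> p q [a [b [a0 [b1 H]]]].
exists (1 - b), (1 - a); split; first lra; split; first lra.
move=> t ht1 ht2.
have [H1 H2] := H (1 - t) ltac:(lra) ltac:(lra).
have eqx x : (1 - t) * lnphi phi (q x) + t * lnphi phi (p x) =
   (1 - (1 - t)) * lnphi phi (p x) + (1 - t) * lnphi phi (q x) by ring.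
split; first by apply: filterS H1 => x; rewrite eqx.
by under eq_integral => x _ do rewrite eqx.
Qed.



Lemma comb_ident {R : realType} (del t P Q S : R) : 0 < del ->
  let eps := del * del / (1 + 2 * del) in
  let lam := (1 + del) / (1 + 2 * del) in
  let lam' := del / (1 + 2 * del) in
  let kap := (1 + eps - t) / (1 + 2 * eps) in
  (1 - t) * P + t * S =
  kap * (lam * ((1 - - del) * P + - del * Q) + (1 - lam) * ((1 - - del) * Q + - del * S))
  + (1 - kap) * (lam' * ((1 - (1 + del)) * P + (1 + del) * Q)
                 + (1 - lam') * ((1 - (1 + del)) * Q + (1 + del) * S)).
Proof.
move=> d0 eps lam lam' kap.
have h1 : 1 + 2 * del != 0 by apply/negP => /eqP; lra.
have e0 : 0 <= eps by rewrite /eps divr_ge0 //; nra.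
have h2 : 1 + 2 * eps != 0 by apply/negP => /eqP; lra.
rewrite /kap /lam /lam' /eps in h2 *.
field.
rewrite h1 /=; apply/negP => /eqP; nra.
Qed.

Lemma trans_part {d} {T : measurableType d} {R : realType}
  (mu : {measure set T -> \bar R}) (phi : R -> R) : phi_admissible phi ->
  forall p q r, pos_density mu p -> pos_density mu q -> pos_density mu r ->
     phi_connected phi mu p q -> phi_connected phi mu q r ->
     phi_connected phi mu p r.
Proof.
move=> hp p q r [mp [pp _]] [mq [pq _]] [mr [pr _]]
  [a1 [b1 [a10 [b11 H1]]]] [a2 [b2 [a20 [b21 H2]]]].
set m := minr (minr (- a1) (b1 - 1)) (minr (- a2) (b2 - 1)).
have m0 : 0 < m by rewrite !lt_min; apply/andP; split; apply/andP; split; lra.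
have ma1 : m <= - a1 by rewrite !ge_min lexx.
have mb1 : m <= b1 - 1 by rewrite !ge_min lexx !orbT.
have ma2 : m <= - a2 by rewrite !ge_min lexx !orbT.
have mb2 : m <= b2 - 1 by rewrite !ge_min lexx !orbT.
set del := m / 2.
have d0 : 0 < del by rewrite /del; lra.
have dm : del < m by rewrite /del; lra.
set eps := del * del / (1 + 2 * del).
set lam := (1 + del) / (1 + 2 * del).
set lam' := del / (1 + 2 * del).
have e0 : 0 < eps by rewrite /eps divr_gt0 //; nra.
have hlam : 0 <= lam <= 1.
  rewrite /lam; apply/andP; split; first by rewrite divr_ge0 //; lra.
  by rewrite ler_pdivrMr; lra.
have hlam' : 0 <= lam' <= 1.
  rewrite /lam'; apply/andP; split; first by rewrite divr_ge0 //; lra.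
  by rewrite ler_pdivrMr; lra.
have [dA iA] := H1 (- del) ltac:(lra) ltac:(lra).
have [dC iC] := H1 (1 + del) ltac:(lra) ltac:(lra).
have [dB iB] := H2 (- del) ltac:(lra) ltac:(lra).
have [dD iD] := H2 (1 + del) ltac:(lra) ltac:(lra).
pose hA x := (1 - - del) * lnphi phi (p x) + - del * lnphi phi (q x).
pose hB x := (1 - - del) * lnphi phi (q x) + - del * lnphi phi (r x).
pose hC x := (1 - (1 + del)) * lnphi phi (p x) + (1 + del) * lnphi phi (q x).
pose hD x := (1 - (1 + del)) * lnphi phi (q x) + (1 + del) * lnphi phi (r x).
exists (- eps), (1 + eps); split; first lra; split; first lra.
move=> t ht1 ht2.
set kap := (1 + eps - t) / (1 + 2 * eps).
have hkap : 0 <= kap <= 1.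
  rewrite /kap; apply/andP; split; first by rewrite divr_ge0 //; lra.
  by rewrite ler_pdivrMr; lra.
have eqx x : (1 - t) * lnphi phi (p x) + t * lnphi phi (r x) =
  kap * (lam * hA x + (1 - lam) * hB x) + (1 - kap) * (lam' * hC x + (1 - lam') * hD x).
  exact: comb_ident.
have pw x : in_dom_expphi phi (hA x) -> in_dom_expphi phi (hB x) ->
    in_dom_expphi phi (hC x) -> in_dom_expphi phi (hD x) ->
    in_dom_expphi phi ((1 - t) * lnphi phi (p x) + t * lnphi phi (r x)) /\
    expphi phi ((1 - t) * lnphi phi (p x) + t * lnphi phi (r x)) <=
    kap * (lam * expphi phi (hA x) + (1 - lam) * expphi phi (hB x)) +
    (1 - kap) * (lam' * expphi phi (hC x) + (1 - lam') * expphi phi (hD x)).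
  move=> xA xB xC xD.
  have xX := Dom_conv phi hp _ _ _ xA xB hlam.
  have xY := Dom_conv phi hp _ _ _ xC xD hlam'.
  rewrite eqx; split; first exact: Dom_conv.
  apply: (le_trans (E_conv phi hp _ _ _ xX xY hkap)).
  move: hkap => /andP[k0 k1].
  apply: lerD; apply: ler_wpM2l; first by [].
  - exact: E_conv.
  - lra.
  - exact: E_conv.
split.
  apply: filterS (filterI (filterI dA dB) (filterI dC dD)) => x [[xA xB] [xC xD]].
  by case: (pw x xA xB xC xD).
set S0 := [set x | 0 < p x] `&` [set x | 0 < q x] `&` [set x | 0 < r x].
have mS0 : measurable S0.
  by apply: measurableI; [apply: measurableI|]; exact: pos_meas.
have mhA : measurable_fun S0 hA.
  by apply: (h_meas phi hp S0 p q (1 - - del) (- del)) => // x [[]].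
set Dm := in_dom_expphi phi.
have mDm : measurable Dm := Dom_meas phi hp.
set M1 := S0 `&` hA @^-1` Dm.
have mM1 : measurable M1 := mhA mS0 _ mDm.
have mhB : measurable_fun M1 hB.
  by apply: (h_meas phi hp M1 q r (1 - - del) (- del)) => // x [[[]]].
set M2 := M1 `&` hB @^-1` Dm.
have mM2 : measurable M2 := mhB mM1 _ mDm.
have mhC : measurable_fun M2 hC.
  by apply: (h_meas phi hp M2 p q (1 - (1 + del)) (1 + del)) => // x [[[[]]]].
set M3 := M2 `&` hC @^-1` Dm.
have mM3 : measurable M3 := mhC mM2 _ mDm.
have mhD : measurable_fun M3 hD.
  by apply: (h_meas phi hp M3 q r (1 - (1 + del)) (1 + del)) => // x [[[[[]]]]].
set M4 := M3 `&` hD @^-1` Dm.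
have mM4 : measurable M4 := mhD mM3 _ mDm.
have EA : measurable_fun M4 (fun x => expphi phi (hA x)).
  apply: measurable_funS (Eh_meas phi hp S0 hA mS0 mhA) => //.
  by move=> x [[[]]].
have EB : measurable_fun M4 (fun x => expphi phi (hB x)).
  apply: measurable_funS (Eh_meas phi hp M1 hB mM1 mhB) => //.
  by move=> x [[]].
have EC : measurable_fun M4 (fun x => expphi phi (hC x)).
  apply: measurable_funS (Eh_meas phi hp M2 hC mM2 mhC) => //.
  by move=> x [].
have ED : measurable_fun M4 (fun x => expphi phi (hD x)).
  exact: (Eh_meas phi hp M3 hD mM3 mhD).
have null : mu (~` M4) = 0%E.
  apply: (ae_null mu _ mM4).
  apply: filterS (filterI (filterI (filterI pp pq) pr)
      (filterI (filterI dA dB) (filterI dC dD)))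
    => x [[[xp xq] xr] [[xA xB] [xC xD]]].
  by rewrite /M4 /M3 /M2 /M1 /S0 /=.
move: hkap => /andP[k0 k1].
move: hlam => /andP[l0 l1].
move: hlam' => /andP[l0' l1'].
pose g1 x := lam * expphi phi (hA x) + (1 - lam) * expphi phi (hB x).
pose g2 x := lam' * expphi phi (hC x) + (1 - lam') * expphi phi (hD x).
have g10 x : 0 <= g1 x.
  by rewrite /g1 addr_ge0 // mulr_ge0 ?E_ge0 //; lra.
have g20 x : 0 <= g2 x.
  by rewrite /g2 addr_ge0 // mulr_ge0 ?E_ge0 //; lra.
have mg1 : measurable_fun M4 g1.
  rewrite /g1; apply: measurable_funD; apply: measurable_funM.
  - exact: measurable_cst.
  - exact: EA.
  - exact: measurable_cst.
  - exact: EB.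
have mg2 : measurable_fun M4 g2.
  rewrite /g2; apply: measurable_funD; apply: measurable_funM.
  - exact: measurable_cst.
  - exact: EC.
  - exact: measurable_cst.
  - exact: ED.
have mF : measurable_fun M4 (fun x => kap * g1 x + (1 - kap) * g2 x).
  apply: measurable_funD; apply: measurable_funM.
  - exact: measurable_cst.
  - exact: mg1.
  - exact: measurable_cst.
  - exact: mg2.
apply: (le_lt_trans (key mu M4 (fun x => kap * g1 x + (1 - kap) * g2 x) _
   mM4 null mF _ _ _)).
- by move=> x _; rewrite addr_ge0 // mulr_ge0 //; lra.
- by move=> x; exact: E_ge0.
- move=> x [[[[_ xA] xB] xC] xD].
  by case: (pw x xA xB xC xD).
have fin (hh : T -> R) : (\int[mu]_x (expphi phi (hh x))%:E < +oo)%E ->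
    (\int[mu]_(x in M4) (expphi phi (hh x))%:E < +oo)%E.
  by apply: le_lt_trans; apply: restrict_le => y; exact: E_ge0.
apply: (fin2 mu M4 g1 g2 kap (1 - kap) mM4 mg1 mg2 _ _ k0 _ _ _).
- by move=> x _; exact: g10.
- by move=> x _; exact: g20.
- lra.
- apply: (fin2 mu M4 _ _ lam (1 - lam) mM4 EA EB _ _ l0 _ _ _).
  + by move=> x _; exact: E_ge0.
  + by move=> x _; exact: E_ge0.
  + lra.
  + exact: (fin hA iA).
  + exact: (fin hB iB).
- apply: (fin2 mu M4 _ _ lam' (1 - lam') mM4 EC ED _ _ l0' _ _ _).
  + by move=> x _; exact: E_ge0.
  + by move=> x _; exact: E_ge0.
  + lra.
  + exact: (fin hC iC).
  + exact: (fin hD iD).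


Qed.


Theorem proposition19 (R : realType) (d : measure_display) (T : measurableType d)
  (mu : {measure set T -> \bar R}) (phi : R -> R) :
  sigma_finite setT mu ->
  phi_admissible phi ->
  (forall p, pos_density mu p -> phi_connected phi mu p p) /\
  (forall p q, pos_density mu p -> pos_density mu q ->
     phi_connected phi mu p q -> phi_connected phi mu q p) /\
  (forall p q r, pos_density mu p -> pos_density mu q -> pos_density mu r ->
     phi_connected phi mu p q -> phi_connected phi mu q r ->
     phi_connected phi mu p r).
Proof.
move=> _ hp; split; first exact: refl_part.
split; first by move=> p q _ _; exact: sym_part.
exact: trans_part.
Qed.
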